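(* Let $n\ge4$ be even. There exists a quantum query algorithm making exactly 2 queries to the oracle $O_x$ such that, for every $x\in\{0,1\}^n$ with $|x|=n/2$, the algorithm outputs $1$ with probability $1$, and for every $x\in\{0,1\}^n$ with $|x|\in\{0,1,n-1,n\}$, the algorithm outputs $0$ with probability $1$.
   Context: $|x|$ denotes the Hamming weight of a bit string $x$. Quantum query model: a $t$-query quantum query algorithm on inputs $x\in\{0,1\}^n$ acts on a Hilbert space $\mathcal H_{\rm in}\otimes\mathcal H_{\rm work}\otimes\mathcal H_{\rm out}$, where $\mathcal H_{\rm in}$ has orthonormal basis $|0\rangle,\dots,|n\rangle$, $\mathcal H_{\rm work}$ is a finite-dimensional workspace of arbitrary size, and $\mathcal H_{\rm out}$ is one qubit. It is specified by input-independent unitaries $U_0,\dots,U_t$, and on input $x$ produces the state $U_tO_xU_{t-1}O_x\cdots O_xU_0|0\rangle$ ($t$ applications of $O_x$), where the oracle $O_x$ acts on $\mathcal H_{\rm in}$ by $|i\rangle\mapsto(-1)^{x_i}|i\rangle$ with the convention $x_0=0$ (and as the identity on the other registers). The output is obtained by measuring $\mathcal H_{\rm out}$ in the computational basis. *)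

(* Defs.v *)
From HB Require Import structures.
From mathcomp Require Import all_boot all_order all_algebra all_field.
Set Implicit Arguments. Unset Strict Implicit. Unset Printing Implicit Defensive.
Import Order.TTheory GRing.Theory Num.Theory.
Local Open Scope ring_scope.

(* Basis index of H_in (x) H_work (x) H_out:
   H_in has basis |0>,...,|n>  ('I_n.+1),
   H_work has dimension d.+1 (any finite positive dimension, basis 'I_d.+1),
   H_out is one qubit (bool; true = |1>). *)
Definition qidx (n d : nat) : finType := ('I_n.+1 * 'I_d.+1 * bool)%type.

Definition qdim (n d : nat) : nat := #|{: qidx n d}|.

Definition qbasis (n d : nat) (k : 'I_(qdim n d)) : qidx n d := enum_val k.

Definition hweight (n : nat) (x : 'I_n -> bool) : nat := #|[set i | x i]|.

(* x_i with the convention x_0 = 0; index i in 0..n, with x_i (i>=1) = x (i-1) *)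
Definition xext (n : nat) (x : 'I_n -> bool) (i : 'I_n.+1) : bool :=
  match unlift ord0 i with Some j => x j | None => false end.

Definition oracle (n d : nat) (x : 'I_n -> bool) : 'M[algC]_(qdim n d) :=
  diag_mx (\row_k (if xext x (qbasis k).1.1 then -1 else 1)).

Definition init_state (n d : nat) : 'cV[algC]_(qdim n d) :=
  delta_mx (enum_rank ((ord0, ord0, false) : qidx n d)) 0.

(* A t-query algorithm is given by U_0 and the list [U_1; ...; U_t];
   the final state is U_t O_x U_{t-1} O_x ... O_x U_0 |0>. *)
Definition final_state (n d : nat) (U0 : 'M[algC]_(qdim n d))
  (Us : seq 'M[algC]_(qdim n d)) (x : 'I_n -> bool) : 'cV[algC]_(qdim n d) :=
  foldl (fun psi U => U *m (oracle d x *m psi)) (U0 *m init_state n d) Us.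

Definition prob_out (n d : nat) (U0 : 'M[algC]_(qdim n d))
  (Us : seq 'M[algC]_(qdim n d)) (x : 'I_n -> bool) (b : bool) : algC :=
  \sum_(k < qdim n d | (qbasis k).2 == b)
     `|final_state U0 Us x k 0| ^+ 2.

(* Main.v *)
Require Import Defs.
From HB Require Import structures.
From mathcomp Require Import all_boot all_order all_algebra all_field.
From mathcomp Require Import ring zify.
Import Order.TTheory GRing.Theory Num.Theory.
Local Open Scope ring_scope.
Set Implicit Arguments. Unset Strict Implicit. Unset Printing Implicit Defensive.

(* U0 prepares the uniform superposition
   over indices 1..n, V is a (generalized) Householder reflection mapping |i>
   to orthonormal vectors f_i, and W flips the output qubit on the orthogonal
   complement of the span Z of the final states of unbalanced inputs. *)

Lemma sum_option (T : finType) (F : option T -> algC) :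
  \sum_(o : option T) F o = F None + \sum_(t : T) F (Some t).
Proof.
rewrite (bigD1 None) //=; congr (_ + _).
rewrite (reindex_omap Some (fun o => o)) //=; last by case.
by apply: eq_bigl => t; rewrite eqxx.
Qed.

Section Setup.
Variable n : nat.
Definition T2 := ('I_n * 'I_n)%type.
Definition dW := #|{: T2}|.
Definition Sp := (option 'I_n * option T2)%type.
Definition Vw := (Sp * bool)%type.
Definition XX := qidx n dW.

Definition decw (w : 'I_dW.+1) : option T2 := omap enum_val (unlift ord0 w).
Definition encw (o : option T2) : 'I_dW.+1 := oapp (fun p => lift ord0 (enum_rank p)) ord0 o.
Definition vdec (x : XX) : Vw := ((unlift ord0 x.1.1, decw x.1.2), x.2).
Definition venc (v : Vw) : XX := ((oapp (lift ord0) ord0 v.1.1, encw v.1.2), v.2).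

Lemma vdecK : cancel venc vdec.
Proof.
case=> [[i w] b]; rewrite /vdec /venc /=; congr (_,_,_).
  by case: i => [i|] /=; rewrite ?liftK ?unlift_none.
by case: w => [p|]; rewrite /decw /encw /= ?liftK ?unlift_none //= enum_rankK.
Qed.

Lemma vencK : cancel vdec venc.
Proof.
case=> [[i w] b]; rewrite /vdec /venc /=; congr (_,_,_).
  by case: unliftP.
rewrite /decw /encw; case: unliftP => [j ->|->] //=.
by rewrite enum_valK.
Qed.

Lemma sumX (F : Vw -> algC) :
  \sum_(k < qdim n dW) F (vdec (qbasis k)) = \sum_v F v.
Proof.
rewrite (reindex (fun v => enum_rank (venc v))) /=.
  by apply: eq_bigr => v _; rewrite /qbasis enum_rankK vdecK.
exists (fun k => vdec (enum_val k)) => [v _|k _]; first by rewrite enum_rankK vdecK.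
by rewrite vencK enum_valK.
Qed.

Lemma vdec_inj : injective vdec.
Proof. exact: can_inj vencK. Qed.

Lemma qbasis_inj : injective (@qbasis n dW).
Proof. exact: enum_val_inj. Qed.

End Setup.

Lemma sum_pair (A B : finType) (F : (A * B)%type -> algC) :
  \sum_(v : A * B) F v = \sum_(a : A) \sum_(b : B) F (a, b).
Proof. by rewrite pair_bigA; apply: eq_bigr; case. Qed.

Section Mx.
Variable n : nat.
Notation Vw := (Vw n).
Notation N := (qdim n (dW n)).

Definition mxK (K : Vw -> Vw -> algC) : 'M[algC]_N :=
  \matrix_(k, l) K (vdec (qbasis k)) (vdec (qbasis l)).
Definition cvK (v : Vw -> algC) : 'cV[algC]_N := \col_k v (vdec (qbasis k)).
Definition apK (K : Vw -> Vw -> algC) (v : Vw -> algC) := fun a => \sum_b K a b * v b.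

Lemma mxK_cvK K v : mxK K *m cvK v = cvK (apK K v).
Proof.
apply/colP => k; rewrite !mxE /apK -(sumX (fun b => K _ b * v b)).
by apply: eq_bigr => l _; rewrite !mxE.
Qed.

Lemma mxK_unitary K :
  (forall a b, K b a = K a b) -> (forall a b, (K a b)^* = K a b) ->
  (forall a b, \sum_c K a c * K c b = (a == b)%:R) -> mxK K \is unitarymx.
Proof.
move=> Ks Kr KK; apply/unitarymxP/matrixP => k l; rewrite !mxE.
rewrite -(inj_eq (@qbasis_inj n)) -(inj_eq (@vdec_inj n)) -KK -sumX.
apply: eq_bigr => m _; rewrite !mxE Kr; congr (_ * _); exact: Ks.
Qed.

Definition sgn (x : 'I_n -> bool) (j : 'I_n) : algC := if x j then -1 else 1.
Definition sgV (x : 'I_n -> bool) (a : Vw) : algC :=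
  match a.1.1 with Some j => sgn x j | None => 1 end.

Lemma oracle_cvK x v : oracle (dW n) x *m cvK v = cvK (fun a => sgV x a * v a).
Proof.
apply/colP => k; rewrite mul_diag_mx !mxE /sgV /xext /=.
by case: (unlift ord0 _).
Qed.

Definition e0V : Vw := ((None, None), false).

Lemma init_cvK : init_state n (dW n) = cvK (fun a => (a == e0V)%:R).
Proof.
apply/colP => k; rewrite !mxE andbT.
have -> : e0V = vdec ((ord0, ord0, false) : qidx n (dW n)).
  by rewrite /vdec /decw /= unlift_none /= unlift_none.
by rewrite (inj_eq (@vdec_inj n)) -(inj_eq (@enum_val_inj _ _)) enum_rankK.
Qed.

Lemma prob_cvK U0 V W x b phi :
  W *m (oracle (dW n) x *m (V *m (oracle (dW n) x *m (U0 *m init_state n (dW n))))) = cvK phi ->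
  prob_out U0 [:: V; W] x b = \sum_(p : Sp n) `|phi (p, b)| ^+ 2.
Proof.
move=> Hf; rewrite /prob_out /final_state /= Hf.
rewrite big_mkcond /=.
under eq_bigr do rewrite mxE.
have := sumX (fun v : Vw => if v.2 == b then `|phi v| ^+ 2 else 0); rewrite /= => ->.
rewrite sum_pair.
apply: eq_bigr => p _; rewrite big_bool /=.
by case: b; rewrite /= ?addr0 ?add0r.
Qed.

End Mx.

Lemma sum_neq (T : finType) (j : T) (F : T -> algC) :
  \sum_a (a != j)%:R * F a = \sum_a F a - F j.
Proof.
rewrite (bigD1 j) //= eqxx mul0r add0r [X in _ = X - _](bigD1 j) //= addrC addrK.
by apply: eq_bigr => a ->; rewrite mul1r.
Qed.

Lemma sum_delta (T : finType) (j : T) (F : T -> algC) :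
  \sum_a (a == j)%:R * F a = F j.
Proof.
rewrite (bigD1 j) //= eqxx mul1r big1 ?addr0 // => a /negbTE ->; by rewrite mul0r.
Qed.

Lemma sum_delta' (T : finType) (j : T) (F : T -> algC) :
  \sum_a (j == a)%:R * F a = F j.
Proof. by rewrite -(sum_delta j); apply: eq_bigr => a _; rewrite eq_sym. Qed.

Section Comb.
Variable n : nat.
Implicit Types f g w : 'I_n -> algC.

Lemma H1 f g (a : 'I_n) :
  \sum_b (f a - f b) * (g a - g b) =
  n%:R * (f a * g a) - f a * \sum_b g b - g a * \sum_b f b + \sum_b f b * g b.
Proof.
have E : forall b, (f a - f b) * (g a - g b) =
   f a * g a - f a * g b - g a * f b + f b * g b by move=> b; ring.
under eq_bigr do rewrite E.
rewrite !big_split /= !sumrN -!mulr_sumr sumr_const card_ord.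
by rewrite mulrnAr mulr_natl.
Qed.

Lemma H1' f g (j : 'I_n) :
  \sum_a (f a - f j) * (g a - g j) =
  n%:R * (f j * g j) - f j * \sum_b g b - g j * \sum_b f b + \sum_b f b * g b.
Proof.
rewrite -H1; apply: eq_bigr => a _; ring.
Qed.

Lemma L0 f g (j : 'I_n) :
  \sum_a \sum_b ((a != j)%:R * (b != j)%:R) * ((f a - f b) * (g a - g b)) =
  2%:R * (n%:R - 1) * (\sum_a f a * g a - f j * g j)
  - 2%:R * (\sum_a f a - f j) * (\sum_a g a - g j).
Proof.
have E : forall a, \sum_b ((a != j)%:R * (b != j)%:R) * ((f a - f b) * (g a - g b))
   = (a != j)%:R * (\sum_b (f a - f b) * (g a - g b) - (f a - f j) * (g a - g j)).
  move=> a; rewrite -sum_neq mulr_sumr; apply: eq_bigr => b _; ring.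
under eq_bigr do rewrite E.
rewrite sum_neq !subrr mul0r subr0 big_split /= sumrN.
rewrite H1' H1.
under eq_bigr do rewrite H1.
rewrite !big_split /= !sumrN -!mulr_sumr -!mulr_suml sumr_const card_ord.
set P := \sum_a f a * g a; set F := \sum_a f a; set G := \sum_a g a.
rewrite -mulr_natl.
ring.
Qed.

Lemma L0d g (m j : 'I_n) :
  \sum_a \sum_b ((a != j)%:R * (b != j)%:R) * (((a == m)%:R - (b == m)%:R) * (g a - g b)) =
  2%:R * (n%:R - 1) * (\sum_a (a == m)%:R * g a - (j == m)%:R * g j)
  - 2%:R * (\sum_a (a == m)%:R - (j == m)%:R) * (\sum_a g a - g j).
Proof. exact: (L0 (fun a => (a == m)%:R) g j). Qed.

Lemma L0dd (m m' j : 'I_n) :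
  \sum_a \sum_b ((a != j)%:R * (b != j)%:R) *
     (((a == m)%:R - (b == m)%:R) * ((a == m')%:R - (b == m')%:R)) =
  2%:R * (n%:R - 1) * (\sum_a (a == m)%:R * (a == m')%:R - (j == m)%:R * (j == m')%:R)
  - 2%:R * (\sum_a (a == m)%:R - (j == m)%:R) * (\sum_a (a == m')%:R - (j == m')%:R) :> algC.
Proof. exact: (L0 (fun a => (a == m)%:R) (fun a => (a == m')%:R) j). Qed.

Lemma sum_delta1 (m : 'I_n) : \sum_a (a == m)%:R = 1 :> algC.
Proof.
by rewrite (eq_bigr (fun a => (a == m)%:R * 1)) ?(sum_delta m (fun _ => 1)) // => a _; rewrite mulr1.
Qed.

Lemma Gamma (m m' : 'I_n) :
  \sum_j \sum_a \sum_b ((a != j)%:R * (b != j)%:R) *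
     (((a == m)%:R - (b == m)%:R) * ((a == m')%:R - (b == m')%:R)) =
  2%:R * (n%:R - 2%:R) * (n%:R * (m == m')%:R - 1) :> algC.
Proof.
under eq_bigr do rewrite L0dd.
rewrite sum_delta !sum_delta1.
have E : forall j : 'I_n,
  2%:R * (n%:R - 1) * ((m == m')%:R - (j == m)%:R * (j == m')%:R)
   - 2%:R * (1 - (j == m)%:R) * (1 - (j == m')%:R) =
  2%:R * (n%:R - 1) * (m == m')%:R - 2%:R * n%:R * ((j == m)%:R * (j == m')%:R)
  - 2%:R + 2%:R * (j == m)%:R + 2%:R * (j == m')%:R :> algC.
  move=> j; ring.
under eq_bigr do rewrite E.
rewrite !big_split /= !sumrN -!mulr_sumr sum_delta !sum_delta1 sumr_const card_ord.
rewrite !sumr_const !card_ord; ring.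
Qed.

Lemma KL (s : 'I_n -> algC) (m : 'I_n) : (forall k, s k * s k = 1) ->
  \sum_j s j * (\sum_a \sum_b ((a != j)%:R * (b != j)%:R) *
     (((a == m)%:R - (b == m)%:R) * (s a - s b))) =
  2%:R * (\sum_j s j) * (n%:R * s m - \sum_j s j).
Proof.
move=> hs.
under eq_bigr do rewrite L0d.
rewrite sum_delta !sum_delta1.
set S := \sum_j s j.
have E : forall j : 'I_n,
  s j * (2%:R * (n%:R - 1) * (s m - (j == m)%:R * s j) - 2%:R * (1 - (j == m)%:R) * (S - s j))
  = 2%:R * (n%:R - 1) * s m * s j - 2%:R * (n%:R - 1) * (j == m)%:R - 2%:R * S * s j + 2%:R
    + 2%:R * S * ((j == m)%:R * s j) - 2%:R * (j == m)%:R.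
  move=> j.
  transitivity (2%:R * (n%:R - 1) * s m * s j - 2%:R * (n%:R - 1) * (j == m)%:R * (s j * s j)
    - 2%:R * S * s j + 2%:R * (s j * s j)
    + 2%:R * S * ((j == m)%:R * s j) - 2%:R * (j == m)%:R * (s j * s j)); first by ring.
  by rewrite hs; ring.
under eq_bigr do rewrite E.
rewrite !big_split /= !sumrN -!mulr_sumr sum_delta !sum_delta1 sumr_const card_ord.
rewrite -/S -mulr_natl; ring.
Qed.

End Comb.

Section Gen.
Variable V : finType.

Definition hhK (I : finType) (Q : I -> V -> algC) (a b : V) : algC :=
  (a == b)%:R - \sum_i Q i a * Q i b.

Lemma hhK_sq (I : finType) (Q : I -> V -> algC) :
  (forall i j, \sum_c Q i c * Q j c = 2%:R * (i == j)%:R) ->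
  forall a b, \sum_c hhK Q a c * hhK Q c b = (a == b)%:R.
Proof.
move=> HQ a b; rewrite /hhK.
have E : forall c, ((a == c)%:R - \sum_i Q i a * Q i c) * ((c == b)%:R - \sum_i Q i c * Q i b)
  = (a == c)%:R * (c == b)%:R - (a == c)%:R * (\sum_i Q i c * Q i b)
    - (c == b)%:R * (\sum_i Q i a * Q i c)
    + (\sum_i Q i a * Q i c) * (\sum_i Q i c * Q i b).
  by move=> c; ring.
under eq_bigr do rewrite E.
rewrite !big_split /= !sumrN !sum_delta' sum_delta.
have E2 : \sum_c (\sum_i Q i a * Q i c) * (\sum_i Q i c * Q i b)
   = \sum_i \sum_j Q i a * Q j b * (\sum_c Q i c * Q j c).
  under eq_bigr do rewrite big_distrlr /=.
  rewrite exchange_big /=; apply: eq_bigr => i _.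
  rewrite exchange_big /=; apply: eq_bigr => j _.
  by rewrite mulr_sumr; apply: eq_bigr => c _; ring.
rewrite E2.
have E3 : forall i, \sum_j Q i a * Q j b * (\sum_c Q i c * Q j c) = 2%:R * (Q i a * Q i b).
  move=> i; under eq_bigr do rewrite HQ.
  rewrite (eq_bigr (fun j => 2%:R * ((i == j)%:R * (Q i a * Q j b)))); last by move=> j _; ring.
  by rewrite -mulr_sumr sum_delta'.
rewrite (eq_bigr _ (fun i _ => E3 i)).
rewrite -mulr_sumr; ring.
Qed.


Lemma projK_sq (P : V -> V -> algC) :
  (forall a b, \sum_c P a c * P c b = P a b) ->
  forall a b, \sum_c ((a == c)%:R - 2%:R * P a c) * ((c == b)%:R - 2%:R * P c b) = (a == b)%:R.
Proof.
move=> HP a b.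
have E : forall c, ((a == c)%:R - 2%:R * P a c) * ((c == b)%:R - 2%:R * P c b)
  = (a == c)%:R * (c == b)%:R - 2%:R * ((a == c)%:R * P c b) - 2%:R * ((c == b)%:R * P a c)
    + 4%:R * (P a c * P c b).
  by move=> c; ring.
under eq_bigr do rewrite E.
rewrite !big_split /= !sumrN -!mulr_sumr !sum_delta' sum_delta HP; ring.
Qed.

End Gen.

Section Alg.
Variable n : nat.
Hypothesis hn : (2 < n)%N.

Notation Sp := (Sp n).
Notation Vw := (Vw n).

Definition rn : algC := sqrtC n%:R.
Definition irn : algC := rn^-1.
Definition kap : algC := (2 * n * (n - 2))%:R.
Definition etaC : algC := (sqrtC kap)^-1.

Lemma n_neq0 : n%:R != 0 :> algC.
Proof. by rewrite pnatr_eq0; apply/eqP; lia. Qed.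

Lemma kap_neq0 : kap != 0.
Proof. by rewrite /kap pnatr_eq0; apply/eqP; nia. Qed.

Lemma kapE : kap = 2%:R * n%:R * (n%:R - 2%:R).
Proof. by rewrite /kap !natrM natrB //; apply: ltnW. Qed.

Lemma irn2 : irn * irn = n%:R^-1.
Proof. by rewrite /irn -invfM -expr2 /rn sqrtCK. Qed.

Lemma eta2 : etaC * etaC = kap^-1.
Proof. by rewrite /etaC -invfM -expr2 sqrtCK. Qed.

Lemma irn_real : irn \is Num.real.
Proof. by rewrite /irn rpredV // sqrtC_real // ler0n. Qed.

Lemma eta_real : etaC \is Num.real.
Proof. by rewrite /etaC rpredV // sqrtC_real // ler0n. Qed.

Lemma sum_Sp (F : Sp -> algC) :
  \sum_p F p = F (None, None) + \sum_w F (None, Some w) + \sum_i F (Some i, None)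
     + \sum_i \sum_a \sum_b F (Some i, Some (a, b)).
Proof.
rewrite sum_pair sum_option sum_option.
under [X in _ + X]eq_bigr do rewrite sum_option.
rewrite big_split /= !addrA; congr (_ + _).
by apply: eq_bigr => i _; rewrite sum_pair.
Qed.

Lemma sum_Sp_SS (F : Sp -> algC) :
  (forall w, F (None, w) = 0) -> (forall i, F (Some i, None) = 0) ->
  \sum_p F p = \sum_i \sum_a \sum_b F (Some i, Some (a, b)).
Proof.
move=> h1 h2; rewrite sum_Sp.
have -> : \sum_w F (None, Some w) = 0 by apply: big1 => w _; exact: h1.
have -> : \sum_i F (Some i, None) = 0 by apply: big1 => i _; exact: h2.
by rewrite h1 !add0r.
Qed.

Definition indS (j a b : 'I_n) : algC := (a != j)%:R * (b != j)%:R.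
Definition e0S (p : Sp) : algC := match p with (None, None) => 1 | _ => 0 end.
Definition GS (m : 'I_n) (p : Sp) : algC :=
  match p with
  | (Some j, Some (a, b)) => indS j a b * ((a == m)%:R - (b == m)%:R)
  | _ => 0 end.
Definition uS (p : Sp) : algC := match p with (Some _, None) => irn | _ => 0 end.
Definition ES (i : 'I_n) (p : Sp) : algC :=
  match p with (Some k, None) => (k == i)%:R | _ => 0 end.
Definition FS (i : 'I_n) (p : Sp) : algC := irn * e0S p + etaC * GS i p.

Lemma indS2 j a b : indS j a b * indS j a b = indS j a b.
Proof. by rewrite /indS; case: (a != j); case: (b != j); rewrite /= ?mul1r ?mul0r. Qed.

Lemma GG m m' : \sum_p GS m p * GS m' p = 2%:R * (n%:R - 2%:R) * (n%:R * (m == m')%:R - 1).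
Proof.
rewrite sum_Sp_SS; last by move=> i; rewrite /= mul0r.
  2: by move=> w; rewrite /= mul0r.
rewrite -(Gamma m m'); apply: eq_bigr => j _; apply: eq_bigr => a _.
apply: eq_bigr => b _ /=.
by rewrite mulrACA indS2.
Qed.

Lemma e0e0 : \sum_p e0S p * e0S p = 1.
Proof.
rewrite sum_Sp /= mulr1 !big1 ?addr0 // => i _; try apply: big1 => a _; try apply: big1 => b _;
  by rewrite mulr0.
Qed.

Lemma e0G m : \sum_p e0S p * GS m p = 0.
Proof.
rewrite sum_Sp /= mulr0 !big1 ?addr0 // => i _; try apply: big1 => a _; try apply: big1 => b _;
  by rewrite mul0r.
Qed.

Lemma sumG p : \sum_m GS m p = 0.
Proof.
case: p => [[j|] [[a b]|]] /=; try by rewrite big1.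
rewrite -mulr_sumr sumrB.
have E : forall c : 'I_n, \sum_m (c == m)%:R = 1 :> algC.
  by move=> c; under eq_bigr do rewrite eq_sym; rewrite sum_delta1.
by rewrite !E subrr mulr0.
Qed.

Lemma GG3 m m' : \sum_i \sum_a \sum_b GS m (Some i, Some (a, b)) * GS m' (Some i, Some (a, b))
   = 2%:R * (n%:R - 2%:R) * (n%:R * (m == m')%:R - 1).
Proof.
rewrite -GG sum_Sp_SS //; first by move=> w; rewrite /= mul0r.
by move=> i; rewrite /= mul0r.
Qed.

Definition onF (v : Sp -> algC) (a : Vw) : algC := if a.2 then 0 else v a.1.

Lemma inner_onF u v : \sum_c onF u c * onF v c = \sum_p u p * v p.
Proof.
rewrite sum_pair; apply: eq_bigr => p _.
by rewrite big_bool /onF /= mul0r add0r.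
Qed.

Definition Q0 (i : 'I_1) : Vw -> algC := onF (fun p => e0S p - uS p).
Definition QV (i : 'I_n) : Vw -> algC := onF (fun p => ES i p - FS i p).

Lemma Q0_orth i j : \sum_c Q0 i c * Q0 j c = 2%:R * (i == j)%:R.
Proof.
rewrite (ord1 i) (ord1 j) eqxx mulr1 inner_onF sum_Sp /=; clear i j.
rewrite /e0S /uS /=.
rewrite big1 ?addr0; last by move=> w _; rewrite subrr mul0r.
rewrite [X in _ + X]big1 ?addr0; last by move=> i _; apply: big1 => a _; apply: big1 => b _; rewrite subrr mul0r.
under eq_bigr do rewrite sub0r mulrNN irn2.
rewrite sumr_const card_ord -(mulr_natr (n%:R^-1) n) mulVf ?n_neq0 // subr0 mulr1.
by [].
Qed.

Lemma QV_orth i j : \sum_c QV i c * QV j c = 2%:R * (i == j)%:R.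
Proof.
rewrite inner_onF sum_Sp /ES /FS /e0S /=.
rewrite big1 ?addr0; last by move=> w _; rewrite /= !mulr0 !addr0 subrr mul0r.
have -> : \sum_k ((k == i)%:R - (irn * 0 + etaC * 0)) * ((k == j)%:R - (irn * 0 + etaC * 0))
   = (i == j)%:R :> algC.
  rewrite (eq_bigr (fun k => (k == i)%:R * (k == j)%:R)); first by rewrite sum_delta.
  by move=> k _; rewrite !mulr0 !addr0 !subr0.
have -> : \sum_k \sum_a \sum_b (0 - (irn * 0 + etaC * GS i (Some k, Some (a, b)))) *
       (0 - (irn * 0 + etaC * GS j (Some k, Some (a, b))))
   = etaC * etaC * (2%:R * (n%:R - 2%:R) * (n%:R * (i == j)%:R - 1)).
  rewrite -GG3 !mulr_sumr; apply: eq_bigr => k _; rewrite !mulr_sumr; apply: eq_bigr => a _.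
  rewrite !mulr_sumr; apply: eq_bigr => b _; ring.
rewrite mulr1 mulr0 !addr0 sub0r mulrNN irn2 eta2 kapE.
have h2 : n%:R - 2%:R != 0 :> algC.
  by rewrite -natrB ?pnatr_eq0; [apply/eqP; lia | apply: ltnW].
field.
by rewrite n_neq0 h2.
Qed.

Lemma sum_e0 (Y : Sp -> algC) : \sum_r e0S r * Y r = Y (None, None).
Proof.
rewrite sum_Sp /= mul1r !big1 ?addr0 // => i _; try apply: big1 => a _; try apply: big1 => b _;
  by rewrite mul0r.
Qed.

Definition pz (p q : Sp) : algC := e0S p * e0S q + kap^-1 * \sum_m GS m p * GS m q.

Lemma AB_sum p q : \sum_r (\sum_m GS m p * GS m r) * (\sum_m GS m r * GS m q)
   = kap * \sum_m GS m p * GS m q.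
Proof.
have E2 : \sum_r (\sum_m GS m p * GS m r) * (\sum_m GS m r * GS m q)
   = \sum_m \sum_m' GS m p * GS m' q * (\sum_r GS m r * GS m' r).
  under eq_bigr do rewrite big_distrlr /=.
  rewrite exchange_big /=; apply: eq_bigr => i _.
  rewrite exchange_big /=; apply: eq_bigr => j _.
  by rewrite mulr_sumr; apply: eq_bigr => c _; ring.
rewrite E2.
have E3 : forall m, \sum_m' GS m p * GS m' q * (\sum_r GS m r * GS m' r)
    = kap * (GS m p * GS m q).
  move=> m; under eq_bigr do rewrite GG.
  rewrite (eq_bigr (fun m' => 2%:R * (n%:R - 2%:R) * GS m p *
     (n%:R * ((m == m')%:R * GS m' q) - GS m' q))); last by move=> m' _; ring.
  rewrite -mulr_sumr sumrB -mulr_sumr sum_delta' sumG subr0 kapE; ring.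
rewrite (eq_bigr _ (fun m _ => E3 m)).
by rewrite -mulr_sumr.
Qed.

Lemma pz_sq p q : \sum_r pz p r * pz r q = pz p q.
Proof.
have E : forall r, pz p r * pz r q =
   e0S r * (e0S p * e0S q * e0S r + e0S p * kap^-1 * (\sum_m GS m r * GS m q)
            + kap^-1 * e0S q * (\sum_m GS m p * GS m r))
   + kap^-1 * kap^-1 * ((\sum_m GS m p * GS m r) * (\sum_m GS m r * GS m q)).
  by move=> r; rewrite /pz; ring.
under eq_bigr do rewrite E.
rewrite big_split /= sum_e0 -[X in _ + X = _]mulr_sumr AB_sum.
have Z1 : \sum_m GS m (None, None) * GS m q = 0 by apply: big1 => m _; rewrite /= mul0r.
have Z2 : \sum_m GS m p * GS m (None, None) = 0 by apply: big1 => m _; rewrite /= mulr0.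
rewrite Z1 Z2.
rewrite /pz /=; field.
by rewrite n_neq0 andbT pnatr_eq0; apply/eqP; lia.
Qed.

End Alg.

Lemma hhK_sym (V : finType) (I : finType) (Q : I -> V -> algC) a b : hhK Q b a = hhK Q a b.
Proof. by rewrite /hhK eq_sym; congr (_ - _); apply: eq_bigr => i _; rewrite mulrC. Qed.

Lemma hhK_real (V : finType) (I : finType) (Q : I -> V -> algC) a b :
  (forall i c, Q i c \is Num.real) -> hhK Q a b \is Num.real.
Proof.
move=> HQ; rewrite /hhK rpredB ?realn // rpred_sum // => i _.
by rewrite rpredM.
Qed.

Lemma apK_hh (V : finType) (I : finType) (Q : I -> V -> algC) (v : V -> algC) a :
  \sum_b hhK Q a b * v b = v a - \sum_i Q i a * (\sum_b Q i b * v b).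
Proof.
rewrite /hhK.
under eq_bigr do rewrite mulrBl.
rewrite sumrB sum_delta'; congr (_ - _).
under eq_bigr do rewrite mulr_suml.
rewrite exchange_big /=; apply: eq_bigr => i _.
by rewrite mulr_sumr; apply: eq_bigr => b _; rewrite mulrA.
Qed.

Section Alg2.
Variable n : nat.
Hypothesis hn : (2 < n)%N.
Notation Sp := (Sp n).
Notation Vw := (Vw n).

Lemma e0S_real (p : Sp) : e0S p \is Num.real.
Proof. by case: p => [[?|] [?|]] //=; rewrite ?rpred0 ?rpred1. Qed.

Lemma GS_real (m : 'I_n) (p : Sp) : GS m p \is Num.real.
Proof.
case: p => [[j|] [[a b]|]] //=; rewrite ?rpred0 //.
by apply: rpredM; [apply: rpredM | apply: rpredB]; apply: realn.
Qed.

Lemma uS_real (p : Sp) : uS p \is Num.real.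
Proof. by case: p => [[?|] [?|]] //=; rewrite ?rpred0 ?irn_real. Qed.

Lemma ES_real (i : 'I_n) (p : Sp) : ES i p \is Num.real.
Proof. by case: p => [[?|] [?|]] //=; rewrite ?rpred0 ?realn. Qed.

Lemma FS_real (i : 'I_n) (p : Sp) : FS i p \is Num.real.
Proof. by rewrite /FS rpredD ?rpredM ?irn_real ?eta_real ?e0S_real ?GS_real. Qed.

Lemma onF_real (v : Sp -> algC) (a : Vw) : (forall p, v p \is Num.real) -> onF v a \is Num.real.
Proof. by move=> h; rewrite /onF; case: a.2; rewrite ?rpred0. Qed.

Lemma pz_real (p q : Sp) : pz p q \is Num.real.
Proof.
rewrite /pz rpredD ?rpredM ?e0S_real // ?rpredV ?realn //.
by rewrite rpred_sum // => m _; rewrite rpredM ?GS_real.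
Qed.

Lemma pz_sym (p q : Sp) : pz q p = pz p q.
Proof. by rewrite /pz mulrC; congr (_ + _ * _); apply: eq_bigr => m _; rewrite mulrC. Qed.

Definition K0 := hhK (Q0 (n:=n)).
Definition KV := hhK (QV (n:=n)).
Definition mo (x y : bool) : algC := if x == y then 2^-1 else - 2^-1.
Definition PW (a b : Vw) : algC := ((a.1 == b.1)%:R - pz a.1 b.1) * mo a.2 b.2.
Definition KW (a b : Vw) : algC := (a == b)%:R - 2%:R * PW a b.

Lemma U0_unitary : mxK K0 \is unitarymx.
Proof.
apply: mxK_unitary.
- by move=> a b; rewrite /K0 hhK_sym.
- move=> a b; apply: conj_Creal; apply: hhK_real => i c.
  by apply: onF_real => p; rewrite rpredB ?e0S_real ?uS_real.
- by apply: hhK_sq; apply: Q0_orth.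
Qed.

Lemma V_unitary : mxK KV \is unitarymx.
Proof.
apply: mxK_unitary.
- by move=> a b; rewrite /KV hhK_sym.
- move=> a b; apply: conj_Creal; apply: hhK_real => i c.
  by apply: onF_real => p; rewrite rpredB ?ES_real ?FS_real.
- by apply: hhK_sq; apply: QV_orth.
Qed.

Lemma mo_sq (a b : bool) : \sum_o mo a o * mo o b = mo a b.
Proof.
have h2 : (2%:R : algC) != 0 by rewrite pnatr_eq0.
by rewrite big_bool; case: a; case: b; rewrite /mo /=; field.
Qed.

Lemma D_sq (p q : Sp) : \sum_r ((p == r)%:R - pz p r) * ((r == q)%:R - pz r q) = (p == q)%:R - pz p q.
Proof.
have E : forall r, ((p == r)%:R - pz p r) * ((r == q)%:R - pz r q)
  = (p == r)%:R * (r == q)%:R - (p == r)%:R * pz r q - (r == q)%:R * pz p r + pz p r * pz r q.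
  by move=> r; ring.
under eq_bigr do rewrite E.
rewrite !big_split /= !sumrN !sum_delta' sum_delta pz_sq //; ring.
Qed.

Lemma PW_sq (a b : Vw) : \sum_c PW a c * PW c b = PW a b.
Proof.
rewrite sum_pair.
have E : forall r o, PW a (r, o) * PW (r, o) b =
  (((a.1 == r)%:R - pz a.1 r) * ((r == b.1)%:R - pz r b.1)) * (mo a.2 o * mo o b.2).
  by move=> r o; rewrite /PW /=; ring.
under eq_bigr do under eq_bigr do rewrite E.
under eq_bigr do rewrite -mulr_sumr mo_sq.
by rewrite -mulr_suml D_sq.
Qed.

Lemma W_unitary : mxK KW \is unitarymx.
Proof.
apply: mxK_unitary.
- move=> a b; rewrite /KW /PW eq_sym pz_sym [a.1 == b.1]eq_sym.
  by rewrite /mo [b.2 == a.2]eq_sym.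
- move=> a b; apply: conj_Creal.
  rewrite /KW /PW rpredB ?realn // rpredM ?realn // rpredM ?rpredB ?realn ?pz_real //.
  by rewrite /mo; case: (_ == _); rewrite ?rpredN rpredV realn.
- by move=> a b; rewrite /KW; apply: projK_sq; apply: PW_sq.
Qed.

End Alg2.

Lemma eq_cvK n (f g : Vw n -> algC) : (forall a, f a = g a) -> cvK f = cvK g.
Proof. by move=> h; apply/colP => k; rewrite !mxE h. Qed.

Section St.
Variable n : nat.
Hypothesis hn : (2 < n)%N.
Variable x : 'I_n -> bool.
Notation Sp := (Sp n).
Notation Vw := (Vw n).

Definition sgS (p : Sp) : algC := match p.1 with Some j => sgn x j | None => 1 end.
Definition psi1 (p : Sp) : algC := sgS p * uS p.
Definition cc (i : 'I_n) : algC := sgn x i * irn n.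
Definition psi2 (p : Sp) : algC := \sum_i cc i * FS i p.
Definition phi (p : Sp) : algC := sgS p * psi2 p.
Definition pzphi (p : Sp) : algC := \sum_r pz p r * phi r.
Definition fin (a : Vw) : algC := if a.2 then phi a.1 - pzphi a.1 else pzphi a.1.

Lemma st1 (a : Vw) : apK (K0 (n:=n)) (fun a => (a == e0V n)%:R) a = onF (uS (n:=n)) a.
Proof.
rewrite /apK /K0 apK_hh big_ord1.
have -> : \sum_b Q0 ord0 b * (b == e0V n)%:R = 1.
  rewrite (eq_bigr (fun b => (b == e0V n)%:R * Q0 ord0 b)); last by move=> b _; rewrite mulrC.
  by rewrite sum_delta /Q0 /onF /= subr0.
rewrite mulr1 /Q0 /onF; case: a => p o /=; case: o => /=.
  by rewrite subr0; case: p => [[?|] [?|]].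
by case: p => [[?|] [?|]] /=; rewrite ?subr0 ?subrr ?sub0r ?opprK.
Qed.

Lemma st2 (a : Vw) : sgV x a * onF (uS (n:=n)) a = onF psi1 a.
Proof. by case: a => p [] //=; rewrite /onF /= mulr0. Qed.

Lemma inner1 i : \sum_p (ES i p - FS i p) * psi1 p = cc i.
Proof.
rewrite sum_Sp /psi1 /= !mulr0.
have -> : \sum_w (0 - FS i (None, Some w)) * 0 = 0 by apply: big1 => w _; rewrite mulr0.
have -> : \sum_j \sum_a \sum_b (0 - FS i (Some j, Some (a, b))) * (sgS (Some j, Some (a, b)) * 0) = 0.
  by apply: big1 => j _; apply: big1 => a _; apply: big1 => b _; rewrite !mulr0.
rewrite !add0r addr0.
rewrite (eq_bigr (fun k => (k == i)%:R * cc k)) ?sum_delta // => k _.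
by rewrite /FS /= !mulr0 addr0 subr0.
Qed.

Lemma psi1_ES p : psi1 p = \sum_i ES i p * cc i.
Proof.
rewrite /psi1; case: p => [[j|] [w|]] /=.
- by rewrite mulr0 big1 // => k _; rewrite mul0r.
- by rewrite sum_delta'.
- by rewrite mulr0 big1 // => k _; rewrite mul0r.
- by rewrite mulr0 big1 // => k _; rewrite mul0r.
Qed.

Lemma st3 (a : Vw) : apK (KV (n:=n)) (onF psi1) a = onF psi2 a.
Proof.
rewrite /apK /KV apK_hh /QV.
under eq_bigr do rewrite inner_onF inner1.
case: a => p [] /=; rewrite /onF /=.
  by rewrite big1 ?subrr // => i _; rewrite mul0r.
rewrite psi1_ES -sumrB /psi2; apply: eq_bigr => i _; ring.
Qed.

Lemma st4 (a : Vw) : sgV x a * onF psi2 a = onF phi a.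
Proof. by case: a => p [] //=; rewrite /onF /= mulr0. Qed.

Lemma st5 (a : Vw) : apK (KW (n:=n)) (onF phi) a = fin a.
Proof.
rewrite /apK /KW.
under eq_bigr do rewrite mulrBl.
rewrite sumrB sum_delta'.
have -> : \sum_b 2%:R * PW a b * onF phi b = 2%:R * (mo a.2 false * (phi a.1 - pzphi a.1)).
  under eq_bigr do rewrite -mulrA.
  rewrite -mulr_sumr; congr (_ * _).
  rewrite sum_pair.
  under eq_bigr do rewrite big_bool /onF /= mulr0 add0r.
  rewrite /PW /pzphi /=.
  rewrite -(sum_delta' a.1 phi) -sumrB mulr_sumr.
  by apply: eq_bigr => r _; ring.
have h2 : (2%:R : algC) != 0 by rewrite pnatr_eq0.
by case: a => p [] /=; rewrite /fin /onF /mo /=; field.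
Qed.

Lemma final_eq : mxK (KW (n:=n)) *m (oracle (dW n) x *m (mxK (KV (n:=n)) *m
  (oracle (dW n) x *m (mxK (K0 (n:=n)) *m init_state n (dW n))))) = cvK fin.
Proof.
rewrite init_cvK mxK_cvK (eq_cvK st1) oracle_cvK (eq_cvK st2) mxK_cvK (eq_cvK st3).
by rewrite oracle_cvK (eq_cvK st4) mxK_cvK (eq_cvK st5).
Qed.

End St.

Section Ph.
Variable n : nat.
Hypothesis hn : (2 < n)%N.
Variable x : 'I_n -> bool.
Notation Sp := (Sp n).
Notation s := (sgn x).
Definition SS : algC := \sum_j s j.

Lemma s2 k : s k * s k = 1.
Proof. by rewrite /sgn; case: (x k); rewrite ?mulrNN mulr1. Qed.

Lemma phiNN : phi x (None, None) = irn n * irn n * SS.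
Proof.
rewrite /phi /psi2 /= mul1r /SS mulr_sumr; apply: eq_bigr => i _.
by rewrite /cc /FS /= mulr1 mulr0 addr0; ring.
Qed.

Lemma phiSS j a b : phi x (Some j, Some (a, b)) =
  s j * irn n * etaC n * (indS j a b * (s a - s b)).
Proof.
rewrite /phi /psi2 /=.
rewrite (eq_bigr (fun i => irn n * etaC n * indS j a b * ((a == i)%:R * s i - (b == i)%:R * s i))); last first.
  by move=> i _; rewrite /cc /FS /= mulr0 add0r; ring.
by rewrite -mulr_sumr sumrB !sum_delta' /sgS /=; ring.
Qed.

Lemma phiNS w : phi x (None, Some w) = 0.
Proof.
rewrite /phi /psi2 /= mul1r big1 // => i _.
by rewrite /FS /= !mulr0 ?addr0 ?mulr0.
Qed.

Lemma phiSN j : phi x (Some j, None) = 0.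
Proof.
rewrite /phi /psi2 /= big1 ?mulr0 // => i _.
by rewrite /FS /= !mulr0 ?addr0 ?mulr0.
Qed.

Lemma Gphi m : \sum_r GS m r * phi x r = irn n * etaC n * (2%:R * SS * (n%:R * s m - SS)).
Proof.
rewrite sum_Sp_SS; last first.
- by move=> i; rewrite /= mul0r.
- by move=> w; rewrite /= mul0r.
rewrite -KL; last exact: s2.
rewrite mulr_sumr; apply: eq_bigr => j _.
rewrite !mulr_sumr; apply: eq_bigr => a _.
rewrite !mulr_sumr; apply: eq_bigr => b _.
rewrite phiSS /=.
transitivity (irn n * etaC n * (s j * ((indS j a b * indS j a b) * (((a == m)%:R - (b == m)%:R) * (s a - s b))))).
  by ring.
by rewrite indS2.
Qed.

Lemma pzphiE p : pzphi x p = e0S p * phi x (None, None)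
   + (kap n)^-1 * \sum_m GS m p * (\sum_r GS m r * phi x r).
Proof.
rewrite /pzphi /pz.
under eq_bigr do rewrite mulrDl.
rewrite big_split /=.
under eq_bigr do rewrite -mulrA.
rewrite -mulr_sumr sum_e0; congr (_ + _).
under eq_bigr do rewrite -mulrA.
rewrite -mulr_sumr; congr (_ * _).
rewrite (eq_bigr (fun i => \sum_m GS m p * GS m i * phi x i)); last by move=> i _; rewrite mulr_suml.
rewrite exchange_big /=; apply: eq_bigr => m _.
by rewrite mulr_sumr; apply: eq_bigr => r _; ring.
Qed.

Lemma pzNN : pzphi x (None, None) = phi x (None, None).
Proof. by rewrite pzphiE /= mul1r big1 ?mulr0 ?addr0 // => m _; rewrite mul0r. Qed.

Lemma pzNS w : pzphi x (None, Some w) = 0.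
Proof. by rewrite pzphiE /= mul0r big1 ?mulr0 ?addr0 // => m _; rewrite mul0r. Qed.

Lemma pzSN j : pzphi x (Some j, None) = 0.
Proof. by rewrite pzphiE /= mul0r big1 ?mulr0 ?addr0 // => m _; rewrite mul0r. Qed.

Lemma pzSS j a b : pzphi x (Some j, Some (a, b)) =
  irn n * etaC n * (2%:R * SS * n%:R / kap n) * (indS j a b * (s a - s b)).
Proof.
rewrite pzphiE /= mul0r add0r.
under eq_bigr do rewrite Gphi.
rewrite (eq_bigr (fun m => irn n * etaC n * 2%:R * SS * indS j a b *
   (n%:R * ((a == m)%:R * s m - (b == m)%:R * s m) - SS * ((a == m)%:R - (b == m)%:R)))); last first.
  by move=> m _; ring.
rewrite -mulr_sumr sumrB -mulr_sumr -mulr_sumr !sumrB !sum_delta'.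
have E : forall c : 'I_n, \sum_m (c == m)%:R = 1 :> algC.
  by move=> c; under eq_bigr do rewrite eq_sym; rewrite sum_delta1.
rewrite !E subrr mulr0 subr0; field.
by rewrite (n_neq0 hn) andbT pnatr_eq0; apply/eqP; lia.
Qed.

End Ph.

Section Fin.
Variable n : nat.
Hypothesis hn : (2 < n)%N.
Variable x : 'I_n -> bool.
Notation Sp := (Sp n).
Notation s := (sgn x).

Lemma sgn_real k : s k \is Num.real.
Proof. by rewrite /sgn; case: (x k); rewrite ?rpredN rpred1. Qed.

Lemma phi_real p : phi x p \is Num.real.
Proof.
rewrite /phi rpredM //.
  by rewrite /sgS; case: p.1 => [j|]; rewrite ?sgn_real ?rpred1.
rewrite /psi2 rpred_sum // => i _.
by rewrite rpredM ?FS_real // /cc rpredM ?sgn_real ?irn_real.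
Qed.

Lemma norm_phi : \sum_p `|phi x p| ^+ 2 = 1.
Proof.
under eq_bigr do rewrite real_normK ?phi_real //.
rewrite sum_Sp phiNN.
have -> : \sum_w phi x (None, Some w) ^+ 2 = 0 by apply: big1 => w _; rewrite phiNS expr0n.
have -> : \sum_j phi x (Some j, None) ^+ 2 = 0 by apply: big1 => w _; rewrite phiSN expr0n.
have E : forall j a b, phi x (Some j, Some (a, b)) ^+ 2 =
   irn n * irn n * (etaC n * etaC n) * (indS j a b * ((s a - s b) * (s a - s b))).
  move=> j a b; rewrite phiSS.
  transitivity (irn n * irn n * (etaC n * etaC n) * (s j * s j) * ((indS j a b * indS j a b) * ((s a - s b) * (s a - s b)))).
    by ring.
  by rewrite s2 indS2 mulr1.
under eq_bigr do under eq_bigr do under eq_bigr do rewrite E.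
under eq_bigr do under eq_bigr do rewrite -mulr_sumr.
under eq_bigr do rewrite -mulr_sumr L0.
rewrite -mulr_sumr.
have hss : \sum_a s a * s a = n%:R.
  by under eq_bigr do rewrite s2; rewrite sumr_const card_ord.
rewrite hss.
have E2 : forall j, 2%:R * (n%:R - 1) * (n%:R - s j * s j) - 2%:R * (SS x - s j) * (SS x - s j)
  = 2%:R * (n%:R - 1) * (n%:R - 1) - 2%:R * SS x * SS x - 2%:R + 4%:R * SS x * s j.
  move=> j; transitivity (2%:R * (n%:R - 1) * (n%:R - s j * s j) - 2%:R * SS x * SS x
     - 2%:R * (s j * s j) + 4%:R * SS x * s j); first by ring.
  by rewrite s2 mulr1.
under eq_bigr do rewrite E2.
rewrite !big_split /= !sumrN.
have -> : \sum_i 4%:R * SS x * s i = 4%:R * SS x * SS x by rewrite -mulr_sumr.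
rewrite !sumr_const !card_ord.
rewrite irn2 eta2 // kapE //.
have h2 : n%:R - 2%:R != 0 :> algC.
  by rewrite -natrB ?pnatr_eq0; [apply/eqP; lia | apply: ltnW].
field.
by rewrite (n_neq0 hn) h2.
Qed.

End Fin.

Section W.
Variable n : nat.
Hypothesis hn : (2 < n)%N.
Variable x : 'I_n -> bool.
Notation Sp := (Sp n).
Notation s := (sgn x).

Lemma sum_x : \sum_j (x j)%:R = (#|[set i | x i]|)%:R :> algC.
Proof.
rewrite cardsE -sum1_card natr_sum [RHS]big_mkcond /=; apply: eq_bigr => i _.
by rewrite unfold_in; case: (x i).
Qed.

Lemma SS_weight : SS x = n%:R - 2%:R * (hweight x)%:R.
Proof.
rewrite /SS /hweight -sum_x.
rewrite (eq_bigr (fun j => 1 - 2%:R * (x j)%:R)); last first.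
  by move=> j _; rewrite /sgn; case: (x j); rewrite ?mulr1 ?mulr0 ?subr0 //; ring.
by rewrite sumrB sumr_const card_ord -mulr_sumr.
Qed.

Lemma bal_SS : ~~ odd n -> hweight x = n./2 -> SS x = 0.
Proof.
move=> hev hw; rewrite SS_weight hw.
have hnn : n = (2 * n./2)%N.
  by rewrite mul2n -{1}(odd_double_half n) (negbTE hev) add0n.
by rewrite {1}hnn natrM subrr.
Qed.

Lemma unbal_key : hweight x \in [:: 0%N; 1%N; n.-1; n] ->
  forall j a b, a != j -> b != j -> SS x * (s a - s b) = (n%:R - 2%:R) * s j * (s a - s b).
Proof.
move=> hw j a b haj hbj.
case hab: (x a == x b).
  by rewrite /sgn (eqP hab) subrr !mulr0.
set A := [set i | x i].
have hA : hweight x = #|A| by [].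
have hcard : (#|A| + #|~: A| = n)%N by rewrite cardsC card_ord.
have inA : forall k, (k \in A) = x k by move=> k; rewrite inE.
have hjab : forall e, (x a == x b) = false -> (forall k, x k = (k == e)) -> j != e.
  move=> e hab' hx; apply/negP => /eqP je; move: hab'; rewrite !hx -je.
  by rewrite (negbTE haj) (negbTE hbj).
move: hw; rewrite !inE => /or4P [] /eqP hw.
- exfalso.
  have /eqP A0 : A == set0 by rewrite -cards_eq0 -hA hw.
  have hx : forall k, x k = false by move=> k; rewrite -inA A0 inE.
  by move: hab; rewrite !hx.
- have /cards1P [e Ae] : #|A| == 1%N by rewrite -hA hw.
  have hx : forall k, x k = (k == e) by move=> k; rewrite -inA Ae in_set1.
  have hje := hjab e hab hx.
  have sj : s j = 1 by rewrite /sgn hx (negbTE hje).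
  by rewrite SS_weight hw sj; ring.
- have /cards1P [e Ae] : #|~: A| == 1%N by apply/eqP; rewrite -hA hw in hcard; lia.
  have hx : forall k, x k = ~~ (k == e).
    by move=> k; rewrite -in_set1 -Ae inE negbK.
  have hx' : forall k, (~~ x k) = (k == e) by move=> k; rewrite hx negbK.
  have hje : j != e.
    apply/negP => /eqP je; move: hab; rewrite !hx -je (negbTE haj) (negbTE hbj).
    by [].
  have sj : s j = -1 by rewrite /sgn hx hje.
  have hpn : (n.-1)%:R = n%:R - 1 :> algC.
    by rewrite -subn1 natrB //; apply: ltnW; apply: ltn_trans hn.
  by rewrite SS_weight hw sj hpn; ring.
- exfalso.
  have /eqP A0 : ~: A == set0 by rewrite -cards_eq0; apply/eqP; rewrite -hA hw in hcard; lia.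
  have hx : forall k, x k = true.
    by move=> k; apply/negPn; rewrite -inA -in_setC A0 inE.
  by move: hab; rewrite !hx.
Qed.


Lemma pz_bal : SS x = 0 -> forall p, pzphi x p = 0.
Proof.
move=> h0; case=> [[j|] [[a b]|]].
- by rewrite (pzSS hn) h0 !(mulr0, mul0r).
- exact: pzSN.
- exact: pzNS.
- by rewrite pzNN phiNN h0 mulr0.
Qed.

Lemma pz_unbal : hweight x \in [:: 0%N; 1%N; n.-1; n] -> forall p, pzphi x p = phi x p.
Proof.
move=> hw; case=> [[j|] [[a b]|]].
- rewrite (pzSS hn) phiSS /indS.
  case haj: (a != j); case hbj: (b != j); rewrite /= ?(mul0r, mulr0) //.
  have key := unbal_key hw haj hbj.
  transitivity (irn n * etaC n * (2%:R * n%:R / kap n) * (SS x * (s a - s b))); first by ring.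
  rewrite key kapE //.
  have h2 : n%:R - 2%:R != 0 :> algC.
    by rewrite -natrB ?pnatr_eq0; [apply/eqP; lia | apply: ltnW].
  field.
  by rewrite (n_neq0 hn) h2.
- by rewrite pzSN phiSN.
- by rewrite pzNS phiNS.
- exact: pzNN.
Qed.

End W.

Unset Implicit Arguments.

Theorem mainTheorem5 (n : nat) (hn4 : (4 <= n)%N) (hnev : ~~ odd n) :
  exists (d : nat) (U0 : 'M[algC]_(qdim n d)) (Us : seq 'M[algC]_(qdim n d)),
    [/\ size Us = 2%N,
        U0 \is unitarymx,
        all (fun U => U \is unitarymx) Us,
        (forall x : 'I_n -> bool, hweight x = n./2 -> prob_out U0 Us x true = 1) &
        (forall x : 'I_n -> bool,
            hweight x \in [:: 0%N; 1%N; n.-1; n] -> prob_out U0 Us x false = 1)].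
Proof.
have hn : (2 < n)%N by lia.
exists (dW n), (mxK (K0 (n:=n))), [:: mxK (KV (n:=n)); mxK (KW (n:=n))].
split => //.
- exact: U0_unitary.
- by rewrite /= (V_unitary hn) (W_unitary hn).
- move=> x hw; rewrite (prob_cvK _ (final_eq x)) /fin /=.
  have h0 := bal_SS hnev hw.
  under eq_bigr do rewrite (pz_bal hn h0) subr0.
  exact: norm_phi.
- move=> x hw; rewrite (prob_cvK _ (final_eq x)) /fin /=.
  under eq_bigr do rewrite (pz_unbal hn hw).
  exact: norm_phi.
Qed.
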